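(* Consider the model described in the context with fixed $N_\text{c}$ and $s$, and let the data rate $r$ vary over $(\lambda L,\infty)$; as $r$ decreases to $\lambda L$ the mean delay $\mathbb{E}\{D\}$ increases to $\infty$. Let $P_\text{o} = N_\text{c} P_\text{Bm} + \Delta_{P_\text{B}} c_0 s^{\beta-1} + P_\text{RF}$ and $P_\text{s} = P_\text{o} - P_\text{sleep} - 2\lambda E_\text{sw}$, and let $\Omega$ denote the principal branch of the Lambert W function. Then: (1) If \[ \lambda < \frac{P_\text{o} - P_\text{sleep}}{2E_\text{sw}} \quad\text{and}\quad L < \frac{W}{\lambda \ln 2}\left[\Omega\!\left(\frac{g\eta P_\text{s} - 1}{\mathrm{e}}\right) + 1\right], \] then there exists a unique rate $r_\text{e}^* \in (\lambda L,\infty)$ minimizing the average power consumption $\mathbb{E}\{P\}$, given by \[ r_\text{e}^* = \frac{W}{\ln 2}\left[\Omega\!\left(\frac{g\eta P_\text{s} - 1}{\mathrm{e}}\right) + 1\right]. \] (2) If this condition is not satisfied, then the average power consumption $\mathbb{E}\{P\}$ is monotonically decreasing in the average delay $\mathbb{E}\{D\}$ (equivalently, increasing in $r$ on $(\lambda L,\infty)$). (3) In both cases, as the average delay tends to infinity (i.e. $r \downarrow \lambda L$), the average power consumption tends to \[ P_\text{o} + \kappa \Delta_{P_\text{B}} s^{\beta-1}\lambda L + \frac{2^{\lambda L/W} - 1}{g\eta}. \]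
   Context: A virtual base station (VBS) is modeled as an M/G/1 processor-sharing queue: flows arrive at rate $\lambda>0$, each with mean size $L>0$, and are served at total rate $r$ (bits/s) whenever the queue is nonempty; $r > \lambda L$, and the load is $\rho = \lambda L / r$. The mean queue length is $\mathbb{E}\{n\} = \lambda L/(r-\lambda L)$ and the mean delay is $\mathbb{E}\{D\} = \mathbb{E}\{n\}/\lambda = L/(r-\lambda L)$. The transmit power $P_\text{out}$ needed for rate $r$ is given by $r = W\log_2(1 + g P_\text{out})$, i.e. $P_\text{out} = (2^{r/W}-1)/g$, where $W>0$ is the bandwidth and $g>0$ the channel gain. When busy the VBS consumes $P_\text{B} + P_\text{R}$ with RRH power $P_\text{R} = P_\text{out}/\eta + P_\text{RF}$ ($\eta\in(0,1]$ the power amplifier efficiency, $P_\text{RF}\ge 0$) and BBU power $P_\text{B} = N_\text{c} P_\text{Bm} + \Delta_{P_\text{B}} c_0 s^{\beta-1} + \Delta_{P_\text{B}}\kappa r s^{\beta-1}$, where $N_\text{c}$ is the number of active CPU cores, $s>0$ the CPU speed, $P_\text{Bm}$ the minimum per-core power, $\Delta_{P_\text{B}} = (P_\text{BM}-P_\text{Bm})/s_0^\beta \ge 0$ with $P_\text{BM}$ the maximum per-core power and $s_0$ a reference speed, and $c_0,\kappa,\beta$ are nonnegative constants. When the queue is empty the VBS sleeps with power $P_\text{sleep}$, and each on/off switch costs energy $E_\text{sw} > 0$. With $\mathbb{E}\{T_\text{c}\} = 1/(\lambda(1-\rho))$ the mean length of a busy-plus-idle cycle, the average power is $\mathbb{E}\{P\}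 = \rho (P_\text{B} + P_\text{R}) + (1-\rho) P_\text{sleep} + 2E_\text{sw}/\mathbb{E}\{T_\text{c}\}$. *)

(* Defs.v *)
From Stdlib Require Import Reals ClassicalEpsilon.
From Coquelicot Require Import Coquelicot.
Open Scope R_scope.

(* Principal branch of the Lambert W function: for y >= -1/e it is the
   unique w >= -1 with w * e^w = y (chosen via Hilbert's epsilon; the
   value for y < -1/e is irrelevant and unspecified). *)
Definition LambertW0 (y : R) : R :=
  epsilon (inhabits 0) (fun w => -1 <= w /\ w * exp w = y).

Definition P_out (W g r : R) : R := (Rpower 2 (r / W) - 1) / g.

Definition DeltaPB (PBM PBm s0 beta : R) : R := (PBM - PBm) / Rpower s0 beta.

Definition P_B (Nc : nat) (PBm PBM s0 beta c0 kappa s r : R) : R :=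
  INR Nc * PBm + DeltaPB PBM PBm s0 beta * c0 * Rpower s (beta - 1)
  + DeltaPB PBM PBm s0 beta * kappa * r * Rpower s (beta - 1).

Definition P_R (W g eta PRF r : R) : R := P_out W g r / eta + PRF.

Definition load (lam L r : R) : R := lam * L / r.

Definition mean_delay (lam L r : R) : R := L / (r - lam * L).

Definition mean_cycle (lam L r : R) : R := 1 / (lam * (1 - load lam L r)).

Definition avg_power (lam L W g eta PRF : R) (Nc : nat)
    (PBm PBM s0 beta c0 kappa s Psleep Esw r : R) : R :=
  load lam L r * (P_B Nc PBm PBM s0 beta c0 kappa s r + P_R W g eta PRF r)
  + (1 - load lam L r) * Psleep
  + 2 * Esw / mean_cycle lam L r.

Definition P_o (Nc : nat) (PBm PBM s0 beta c0 s PRF : R) : R :=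
  INR Nc * PBm + DeltaPB PBM PBm s0 beta * c0 * Rpower s (beta - 1) + PRF.

Definition P_s (Nc : nat) (PBm PBM s0 beta c0 s PRF Psleep lam Esw : R) : R :=
  P_o Nc PBm PBM s0 beta c0 s PRF - Psleep - 2 * lam * Esw.

(* Main.v *)
Require Import Defs.
From Stdlib Require Import Reals ClassicalEpsilon Lra.
From Coquelicot Require Import Coquelicot.
Open Scope R_scope.

Definition uu (a c r : R) := (a*r - 1) * exp (a*r) - c.
Definition phi (a c r : R) := (c + exp (a*r)) / r.

Lemma uu_incr a c x y : 0 < a -> 0 <= x -> x < y -> uu a c x < uu a c y.
Proof.
  intros Ha Hx Hxy.
  destruct (MVT_cor2 (uu a c) (fun r => a*a*r*exp(a*r)) x y Hxy) as [z [Hz1 Hz2]].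
  { intros z _. apply is_derive_Reals. unfold uu. auto_derive; auto. ring. }
  assert (0 < a*a*z*exp(a*z)).
  { assert (0 < exp (a*z)) by apply exp_pos. assert (0 < z) by lra.
    repeat apply Rmult_lt_0_compat; auto. }
  assert (0 < a*a*z*exp(a*z) * (y - x)) by (apply Rmult_lt_0_compat; lra).
  lra.
Qed.

Lemma phi_deriv a c r : r <> 0 -> derivable_pt_lim (phi a c) r (uu a c r / (r*r)).
Proof.
  intros Hr. apply is_derive_Reals. unfold phi, uu. auto_derive; auto.
  field. auto.
Qed.

Lemma phi_incr a c x y : 0 < x -> x < y -> (forall z, x < z < y -> 0 < uu a c z) ->
  phi a c x < phi a c y.
Proof.
  intros Hx Hxy Hu.
  destruct (MVT_cor2 (phi a c) (fun r => uu a c r / (r*r)) x y Hxy) as [z [Hz1 Hz2]].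
  { intros z Hz. apply phi_deriv. lra. }
  assert (0 < uu a c z / (z*z)).
  { apply Rdiv_lt_0_compat. apply Hu; auto. assert (0<z) by lra. nra. }
  assert (0 < uu a c z / (z*z) * (y - x)) by (apply Rmult_lt_0_compat; lra).
  lra.
Qed.

Lemma phi_decr a c x y : 0 < x -> x < y -> (forall z, x < z < y -> uu a c z < 0) ->
  phi a c y < phi a c x.
Proof.
  intros Hx Hxy Hu.
  destruct (MVT_cor2 (phi a c) (fun r => uu a c r / (r*r)) x y Hxy) as [z [Hz1 Hz2]].
  { intros z Hz. apply phi_deriv. lra. }
  assert (0 < - uu a c z / (z*z)).
  { apply Rdiv_lt_0_compat. specialize (Hu z Hz2); lra. assert (0<z) by lra. nra. }
  assert (0 < - uu a c z / (z*z) * (y - x)) by (apply Rmult_lt_0_compat; lra).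
  assert (- uu a c z / (z*z) * (y - x) = - (uu a c z / (z*z) * (y - x))) by (unfold Rdiv; ring).
  lra.
Qed.

Lemma LW_spec y : - / exp 1 < y ->
  -1 < LambertW0 y /\ LambertW0 y * exp (LambertW0 y) = y.
Proof.
  intros Hy.
  assert (H : -1 <= LambertW0 y /\ LambertW0 y * exp (LambertW0 y) = y).
  { unfold LambertW0. apply epsilon_spec.
    set (b := Rabs y + 1).
    assert (Hc : continuity (fun w => w * exp w - y)).
    { intros w. apply continuity_pt_filterlim.
      apply (ex_derive_continuous (fun w => w * exp w - y)). auto_derive; auto. }
    assert (Hb : 1 <= b) by (unfold b; pose proof (Rabs_pos y); lra).
    assert (He : 1 <= exp b).
    { rewrite <- exp_0. destruct (Rle_lt_or_eq_dec 0 b) as [h|h]; try lra.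
      left; apply exp_increasing; auto. }
    assert (Hyb : y < b) by (unfold b; pose proof (Rle_abs y); lra).
    destruct (IVT (fun w => w * exp w - y) (-1) b Hc) as [z [Hz1 Hz2]].
    - lra.
    - assert (exp (-1) = / exp 1) by (apply Rmult_eq_reg_r with (exp 1); [rewrite <- exp_plus, Rinv_l; [replace (-1+1) with 0 by ring; apply exp_0|pose proof (exp_pos 1); lra]|pose proof (exp_pos 1); lra]). nra.
    - nra.
    - exists z. split; lra. }
  destruct H as [H1 H2]. split; auto.
  destruct H1 as [H1|H1]; auto. exfalso. rewrite <- H1 in H2.
  assert (exp (-1) = / exp 1) by (apply Rmult_eq_reg_r with (exp 1); [rewrite <- exp_plus, Rinv_l; [replace (-1+1) with 0 by ring; apply exp_0|pose proof (exp_pos 1); lra]|pose proof (exp_pos 1); lra]).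
  lra.
Qed.

Lemma ln2_pos : 0 < ln 2.
Proof. pose proof ln_lt_2. lra. Qed.

Theorem proposition1
  (lam L W g eta PRF : R) (Nc : nat) (PBm PBM s0 beta c0 kappa s Psleep Esw : R)
  (Hlam : 0 < lam) (HL : 0 < L) (HW : 0 < W) (Hg : 0 < g)
  (Heta0 : 0 < eta) (Heta1 : eta <= 1) (HPRF : 0 <= PRF)
  (Hs : 0 < s) (Hs0 : 0 < s0) (HPB : PBm <= PBM)
  (Hc0 : 0 <= c0) (Hkappa : 0 <= kappa) (Hbeta : 0 <= beta) (HEsw : 0 < Esw) :
  let EP := avg_power lam L W g eta PRF Nc PBm PBM s0 beta c0 kappa s Psleep Esw in
  let Po := P_o Nc PBm PBM s0 beta c0 s PRF in
  let Ps := P_s Nc PBm PBM s0 beta c0 s PRF Psleep lam Esw in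
  let rstar := W / ln 2 * (LambertW0 ((g * eta * Ps - 1) / exp 1) + 1) in
  let cond := lam < (Po - Psleep) / (2 * Esw) /\
              L < W / (lam * ln 2) * (LambertW0 ((g * eta * Ps - 1) / exp 1) + 1) in
  (* (1) unique minimizer of E{P} over (lambda L, oo), equal to rstar *)
  (cond ->
     lam * L < rstar /\
     (forall r, lam * L < r -> r <> rstar -> EP rstar < EP r)) /\
  (* (2) otherwise E{P} is increasing in r, i.e. decreasing in E{D} *)
  (~ cond ->
     forall r1 r2, lam * L < r1 -> r1 < r2 -> EP r1 < EP r2) /\
  (* (3) limit as E{D} -> oo, i.e. r -> lambda L from the right *)
  filterlim EP (at_right (lam * L))
    (locally (Po + kappa * DeltaPB PBM PBm s0 beta * Rpower s (beta - 1) * lam * L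
              + (Rpower 2 (lam * L / W) - 1) / (g * eta))).
Proof.
  intros EP Po Ps rstar cond.
  pose proof ln2_pos as Hln2.
  set (a := ln 2 / W).
  set (k := g * eta).
  set (c := k * Ps - 1).
  set (K := kappa * DeltaPB PBM PBm s0 beta * Rpower s (beta - 1)).
  set (C := lam * L * K + Psleep + 2 * lam * Esw).
  assert (Ha : 0 < a) by (unfold a; apply Rdiv_lt_0_compat; auto).
  assert (Hk : 0 < k) by (unfold k; nra).
  assert (HlL : 0 < lam * L) by nra.
  assert (Hform : forall r, lam * L < r -> EP r = C + (lam * L / k) * phi a c r).
  { intros r Hr.
    assert (Hr0 : 0 < r) by lra.
    unfold EP, avg_power, P_B, P_R, P_out, mean_cycle, load, C, K, phi, c, Ps, P_s, Po, P_o, k.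
    replace (Rpower 2 (r / W)) with (exp (a * r))
      by (unfold Rpower, a; f_equal; field; lra).
    set (D := DeltaPB PBM PBm s0 beta). set (S := Rpower s (beta - 1)).
    set (E := exp (a*r)). set (N := INR Nc).
    assert (1 - lam * L / r <> 0).
    { intro h. assert (lam * L / r = 1) by lra.
      apply (Rmult_eq_compat_r r) in H. unfold Rdiv in H.
      rewrite Rmult_assoc, Rinv_l in H; lra. }
    field. repeat split; lra. }
  set (w := LambertW0 ((g * eta * Ps - 1) / exp 1)).
  assert (Hkey : 0 < Ps -> 0 < rstar /\ uu a c rstar = 0).
  { intros HPs.
    assert (Hy : - / exp 1 < (g * eta * Ps - 1) / exp 1).
    { unfold Rdiv. pose proof (exp_pos 1). assert (0 < / exp 1) by (apply Rinv_0_lt_compat; auto).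
      assert (0 < g*eta*Ps) by (fold k; nra). nra. }
    destruct (LW_spec _ Hy) as [Hw1 Hw2]. fold w in Hw1, Hw2.
    assert (Har : a * rstar = w + 1) by (unfold a, rstar; fold w; field; lra).
    split.
    - unfold rstar; fold w. apply Rmult_lt_0_compat. apply Rdiv_lt_0_compat; auto. lra.
    - unfold uu. rewrite Har. replace (w + 1 - 1) with w by ring.
      rewrite exp_plus, <- Rmult_assoc, Hw2. unfold c, k. field.
      pose proof (exp_pos 1); lra. }
  assert (Hscale : forall x y, lam * L < x -> lam * L < y -> phi a c x < phi a c y -> EP x < EP y).
  { intros x y Hx Hy Hp. rewrite (Hform x Hx), (Hform y Hy).
    assert (0 < lam * L / k) by (apply Rdiv_lt_0_compat; auto). nra. }
  split; [|split].
  -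
    intros [H1 H2].
    assert (HPs : 0 < Ps).
    { unfold Ps, P_s. fold Po.
      apply (Rmult_lt_compat_r (2*Esw)) in H1; [|lra].
      unfold Rdiv in H1. rewrite Rmult_assoc, Rinv_l in H1; lra. }
    destruct (Hkey HPs) as [Hr0 Hu0].
    assert (HlLr : lam * L < rstar).
    { unfold rstar; fold w. fold w in H2.
      apply (Rmult_lt_compat_l lam) in H2; auto.
      replace (lam * (W / (lam * ln 2) * (w + 1))) with (W / ln 2 * (w + 1)) in H2; auto.
      field; lra. }
    split; auto.
    intros r Hr Hne.
    destruct (Rtotal_order r rstar) as [Hlt|[Heq|Hgt]]; [|contradiction|].
    + apply Hscale; auto. apply phi_decr; try lra.
      intros z Hz. rewrite <- Hu0. apply uu_incr; lra.
    + apply Hscale; auto. apply phi_incr; try lra.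
      intros z Hz. rewrite <- Hu0. apply uu_incr; lra.
  -
    intros Hnc r1 r2 Hr1 Hr12.
    apply Hscale; try lra. apply phi_incr; try lra.
    intros z Hz.
    destruct (Rle_or_lt Ps 0) as [HPs|HPs].
    + assert (uu a c 0 < uu a c z) by (apply uu_incr; lra).
      assert (0 <= uu a c 0) by (unfold uu; rewrite Rmult_0_r, exp_0; unfold c; nra). lra.
    + destruct (Hkey HPs) as [Hr0 Hu0].
      assert (Hle : rstar <= lam * L).
      { destruct (Rle_or_lt rstar (lam*L)) as [h|h]; auto. exfalso. apply Hnc. split.
        - unfold Ps, P_s in HPs. fold Po in HPs.
          apply (Rmult_lt_reg_r (2*Esw)); [lra|].
          unfold Rdiv. rewrite Rmult_assoc, Rinv_l; lra.
        - apply (Rmult_lt_reg_l lam); auto.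
          unfold rstar in h; fold w in h. fold w.
          replace (lam * (W / (lam * ln 2) * (w + 1))) with (W / ln 2 * (w + 1)); auto.
          field; lra. }
      rewrite <- Hu0. apply uu_incr; lra.
  -
    set (G := fun r => C + (lam * L / k) * phi a c r).
    apply (filterlim_ext_loc G).
    { exists (mkposreal 1 Rlt_0_1). intros y _ Hy. symmetry. apply Hform; auto. }
    assert (HG : G (lam * L) = Po + K * lam * L
              + (Rpower 2 (lam * L / W) - 1) / k).
    { unfold G, C, K, phi, c, Ps, P_s, k, Po.
      replace (Rpower 2 (lam * L / W)) with (exp (a * (lam * L)))
        by (unfold Rpower, a; f_equal; field; lra).
      field. lra. }
    rewrite <- HG.
    apply (filterlim_filter_le_1 (F := locally (lam * L))).
    { intros P HP. unfold at_right, within. apply (filter_imp P); auto. }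
    apply (ex_derive_continuous G). unfold G, phi. auto_derive. lra.
Qed.
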